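(* Let $a\in\mathbb{R}$ and $w\in\mathbb{C}\setminus\mathbb{R}$ with $(a,w)\in D_c$, and suppose $\varphi := |\operatorname{Arg}(w)| \in (0,\pi/2]$. Then $\tau_c(a,w) > 1$ if and only if $a > 0$ and $|w| < R(-a;\varphi)$.
   Context: $\operatorname{Arg}(w)\in(-\pi,\pi]$ is the principal argument; $\arccos:[-1,1]\to[0,\pi]$. $D_c := \{(a,w)\in\mathbb{R}\times(\mathbb{C}\setminus\{0\}) : \operatorname{Re}(w)<a<|w|\}$ and for $(a,w)\in D_c$, $\tau_c(a,w) := \frac{1}{\sqrt{|w|^2-a^2}}[|\operatorname{Arg}(w)| - \arccos(a/|w|)]$. For $\varphi\in(0,\pi/2]$, $C(\theta;\varphi) := \theta\cot(\theta-\varphi)$ is a strictly decreasing bijection from $[0,\varphi)$ onto $(-\infty,0]$ with inverse $C^{-1}(\cdot;\varphi)$, and $R(r;\varphi) := -C^{-1}(r;\varphi)/\sin(C^{-1}(r;\varphi)-\varphi)$ for $r\le 0$. *)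

(* Defs.v *)
From Stdlib Require Import Reals ClassicalEpsilon.
From Coquelicot Require Import Coquelicot.
Open Scope R_scope.

Definition Arg (w : C) : R :=
  if Rle_dec 0 (Im w) then acos (Re w / Cmod w) else - acos (Re w / Cmod w).

Definition D_c (a : R) (w : C) : Prop := w <> 0%C /\ Re w < a /\ a < Cmod w.

Definition tau_c (a : R) (w : C) : R :=
  / sqrt (Cmod w ^ 2 - a ^ 2) * (Rabs (Arg w) - acos (a / Cmod w)).

Definition Cfun (theta phi : R) : R := theta * (cos (theta - phi) / sin (theta - phi)).

(* Inverse of C(.;phi) : [0,phi) -> (-oo,0], chosen by Hilbert's epsilon
   (the bijection property is the paper's standing fact). *)
Definition Cinv (r phi : R) : R :=
  epsilon (inhabits 0) (fun theta => 0 <= theta < phi /\ Cfun theta phi = r).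

Definition Rfun (r phi : R) : R :=
  - Cinv r phi / sin (Cinv r phi - phi).

(* Main.v *)
Require Import Defs.
From Stdlib Require Import Reals Lra Psatz ClassicalEpsilon.
Lemma Rabs_le_between (x y : R) : Rabs x <= y -> -y <= x <= y.
Proof. intros H. unfold Rabs in H; destruct (Rcase_abs x); lra. Qed.
From Coquelicot Require Import Coquelicot.
Open Scope R_scope.

Lemma h_decr (phi a x y : R) : 0 < a -> 0 <= x -> x < y -> y <= phi -> phi <= PI/2 ->
  (phi - y) * cos y - a * sin y < (phi - x) * cos x - a * sin x.
Proof.
  intros Ha H0 Hxy Hy Hp.
  assert (Hc : cos y < cos x) by (apply cos_decreasing_1; lra).
  assert (Hs : sin x < sin y) by (apply sin_increasing_1; lra).
  assert (Hcy : 0 <= cos y) by (apply cos_ge_0; lra).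
  nra.
Qed.

Theorem mainTheorem13 (a : R) (w : C) :
  Im w <> 0 ->
  D_c a w ->
  0 < Rabs (Arg w) <= PI / 2 ->
  (tau_c a w > 1 <-> (a > 0 /\ Cmod w < Rfun (- a) (Rabs (Arg w)))).
Proof.
  intros _ [Hw0 [Hre Hrho]] Hphi.
  assert (Hr : 0 < Cmod w) by (apply Cmod_gt_0; exact Hw0).
  set (rho := Cmod w) in *.
  set (phi := Rabs (Arg w)) in *.
  assert (Hb : -1 <= Re w / rho <= 1).
  { pose proof (re_le_Cmod w) as H. change (Cmod w) with rho in H. apply Rabs_le_between in H.
    split; apply (Rmult_le_reg_r rho); try lra; unfold Rdiv;
    rewrite Rmult_assoc, Rinv_l; lra. }
  assert (Hphidef : phi = acos (Re w / rho)).
  { unfold phi, Arg. change (Cmod w) with rho. pose proof (acos_bound (Re w / rho)).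
    destruct (Rle_dec 0 (Im w)).
    - apply Rabs_right; lra.
    - rewrite Rabs_Ropp; apply Rabs_right; lra. }
  assert (Hcphi : cos phi = Re w / rho) by (rewrite Hphidef; apply cos_acos; exact Hb).
  assert (HPI := PI_RGT_0).
  assert (Hcphi0 : 0 <= cos phi) by (apply cos_ge_0; lra).
  assert (Hrew : Re w = rho * cos phi) by (rewrite Hcphi; field; lra).
  assert (Ha : 0 < a) by nra.
  assert (Hab : -1 <= a / rho <= 1).
  { split; apply (Rmult_le_reg_r rho); try lra; unfold Rdiv;
    rewrite Rmult_assoc, Rinv_l; lra. }
  set (al := acos (a / rho)).
  assert (Hcal : cos al = a / rho) by (apply cos_acos; exact Hab).
  assert (Hale : 0 <= al <= PI) by apply acos_bound.
  assert (Ha_eq : a = rho * cos al) by (rewrite Hcal; field; lra).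
  assert (Hdiv : Re w / rho < a / rho) by (unfold Rdiv; apply Rmult_lt_compat_r; [apply Rinv_0_lt_compat; lra| lra]).
  assert (Hal_phi : al < phi).
  { destruct (Rlt_or_le al phi) as [h|h]; auto.
    destruct (Rle_lt_or_eq_dec _ _ h) as [h'|h'].
    - pose proof (cos_decreasing_1 phi al ltac:(lra) ltac:(lra) ltac:(lra) ltac:(lra) h'). lra.
    - rewrite h' in Hcphi. lra. }
  assert (Hal0 : 0 < al).
  { destruct (Rle_lt_or_eq_dec _ _ (proj1 Hale)) as [h|h]; auto.
    rewrite <- h, cos_0 in Ha_eq. lra. }
  assert (Hsal : 0 < sin al) by (apply sin_gt_0; lra).
  assert (Hcal0 : 0 < cos al) by (apply cos_gt_0; lra).
  assert (Hsq : sqrt (rho ^ 2 - a ^ 2) = rho * sin al).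
  { replace (rho ^ 2 - a ^ 2) with ((rho * sin al) ^ 2).
    - apply sqrt_pow2. nra.
    - rewrite Ha_eq. pose proof (sin2_cos2 al). unfold Rsqr in *. nra. }
  assert (Hex : exists theta, 0 <= theta < phi /\ Cfun theta phi = - a).
  { set (g := fun x => a * sin x - (phi - x) * cos x).
    assert (Hg : continuity g) by (unfold g; reg).
    assert (Hsphi : 0 < sin phi) by (apply sin_gt_0; lra).
    destruct (IVT g 0 phi Hg ltac:(lra)) as [z [Hz Hgz]].
    - unfold g; rewrite sin_0, cos_0; lra.
    - unfold g; nra.
    - unfold g in Hgz; cbv beta in Hgz.
      assert (Hz0 : z <> 0) by (intro e; subst z; rewrite sin_0, cos_0 in Hgz; lra).
      assert (Hzp : z <> phi) by (intro e; subst z; nra).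
      assert (Hsz : 0 < sin z) by (apply sin_gt_0; lra).
      exists (phi - z). split; [lra|].
      unfold Cfun. replace (phi - z - phi) with (- z) by ring.
      rewrite cos_neg, sin_neg. apply (Rmult_eq_reg_r (- sin z)); [|lra].
      replace ((phi - z) * (cos z / - sin z) * - sin z) with ((phi - z) * cos z) by (field; lra). nra. }
  pose proof (epsilon_spec (inhabits 0) _ Hex) as Hspec.
  fold (Defs.Cinv (- a) phi) in Hspec.
  set (th := Defs.Cinv (- a) phi) in *.
  destruct Hspec as [Hth HC].
  set (al1 := phi - th).
  assert (Hsal1 : 0 < sin al1) by (apply sin_gt_0; unfold al1; lra).
  unfold Cfun in HC. replace (th - phi) with (- al1) in HC by (unfold al1; ring).
  rewrite cos_neg, sin_neg in HC.
  assert (Hh1 : th * cos al1 = a * sin al1).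
  { unfold Rdiv in HC. rewrite <- Ropp_inv_permute in HC by lra.
    assert (E: th * cos al1 = - a * - sin al1).
    { rewrite <- HC. field. lra. }
    lra. }
  assert (Hcal1 : 0 < cos al1).
  { assert (0 <= cos al1) by (apply cos_ge_0; unfold al1; lra).
    destruct (Rle_lt_or_eq_dec _ _ H) as [h|h]; auto.
    rewrite <- h in Hh1. nra. }
  assert (HR : Rfun (- a) phi = th / sin al1).
  { unfold Rfun. fold th. replace (th - phi) with (- al1) by (unfold al1; ring).
    rewrite sin_neg. field. lra. }
  assert (Htau : tau_c a w = (phi - al) / (rho * sin al)).
  { unfold tau_c. fold rho phi. rewrite Hsq. fold al. field. split; lra. }
  rewrite HR, Htau.
  assert (Hal1phi : 0 < al1 <= phi) by (unfold al1; lra).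
  assert (K1 : (phi - al) / (rho * sin al) > 1 <-> al < al1).
  { assert (Hp : 0 < rho * sin al) by nra.
    assert (E : (phi - al) * cos al - a * sin al = cos al * ((phi - al) - rho * sin al))
      by (rewrite Ha_eq; ring).
    assert (Hh0 : (phi - al1) * cos al1 - a * sin al1 = 0) by (unfold al1 in *; replace (phi - (phi - th)) with th by ring; lra).
    split; intro H.
    - apply Rgt_lt in H. apply (Rmult_lt_compat_r (rho * sin al)) in H; auto.
      unfold Rdiv in H. rewrite Rmult_1_l, Rmult_assoc, Rinv_l, Rmult_1_r in H by lra.
      destruct (Rlt_or_le al al1) as [h|h]; auto.
      destruct (Rle_lt_or_eq_dec _ _ h) as [h'|h'].
      + pose proof (h_decr phi a al1 al Ha ltac:(lra) h' ltac:(lra) ltac:(lra)). nra.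
      + rewrite h' in Hh0. nra.
    - pose proof (h_decr phi a al al1 Ha ltac:(lra) H ltac:(lra) ltac:(lra)).
      apply Rlt_gt. apply (Rmult_lt_reg_r (rho * sin al)); auto.
      unfold Rdiv. rewrite Rmult_1_l, Rmult_assoc, Rinv_l, Rmult_1_r by lra. nra. }
  assert (K2 : rho < th / sin al1 <-> al < al1).
  { split; intro H.
    - assert (Hq : rho * sin al1 < th).
      { apply (Rmult_lt_compat_r (sin al1)) in H; auto.
        unfold Rdiv in H. rewrite Rmult_assoc, Rinv_l, Rmult_1_r in H by lra. exact H. }
      assert (Hm : rho * sin al1 * cos al1 < th * cos al1) by (apply Rmult_lt_compat_r; lra).
      assert (Hm2 : rho * sin al1 * cos al = th * cos al1) by (rewrite Hh1, Ha_eq; ring).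
      assert (Hc : cos al1 < cos al).
      { apply (Rmult_lt_reg_l (rho * sin al1)); [nra|lra]. }
      destruct (Rlt_or_le al al1) as [h|h]; auto.
      destruct (Rle_lt_or_eq_dec _ _ h) as [h'|h'].
      + pose proof (cos_decreasing_1 al1 al ltac:(lra) ltac:(lra) ltac:(lra) ltac:(lra) h'). lra.
      + rewrite h' in Hc. lra.
    - pose proof (cos_decreasing_1 al al1 ltac:(lra) ltac:(lra) ltac:(lra) ltac:(lra) H).
      assert (Hm : rho * sin al1 * cos al1 < rho * sin al1 * cos al)
        by (apply Rmult_lt_compat_l; [nra|lra]).
      assert (Hm2 : rho * sin al1 * cos al = th * cos al1) by (rewrite Hh1, Ha_eq; ring).
      assert (rho * sin al1 < th).
      { apply (Rmult_lt_reg_r (cos al1)); lra. }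
      apply (Rmult_lt_reg_r (sin al1)); auto.
      unfold Rdiv. rewrite Rmult_assoc, Rinv_l, Rmult_1_r by lra. exact H1. }
  rewrite K1, K2. tauto.
Qed.
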